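(* Assume (A1)–(A4) below. For any $\omega\in\Delta^{L-1}$, $$\beta^*(\omega)=\sum_{t\in\mathcal T}\psi_t(\omega)\,\mathrm{LATE}_t,\qquad \psi_t(\omega)\ge0,\quad\sum_{t\in\mathcal T}\psi_t(\omega)=1,$$ where $\psi_t(\omega)=\sum_{\ell}\omega_\ell\alpha_t(\ell)$.
   Context: Observe i.i.d. $(Y_i,D_i,\mathbf Z_i)$, $D_i\in\{0,1\}$, $\mathbf Z_i=(Z_{1i},\dots,Z_{Li})'\in\{0,1\}^L$, $L\ge2$. Units have potential outcomes $Y_i(0),Y_i(1)$ and compliance type $D_i(\cdot):\{0,1\}^L\to\{0,1\}$, $D_i=D_i(\mathbf Z_i)$, $Y_i=D_iY_i(1)+(1-D_i)Y_i(0)$; $\mathcal T$ is the set of types, $\theta_t=P(D_i(\cdot)=t)$, $\mathrm{LATE}_t=\mathbb E[Y_i(1)-Y_i(0)\mid D_i(\cdot)=t]$, and $t(z_\ell,z_{-\ell})$ is type $t$'s treatment at the instrument vector with $\ell$-th coordinate $z_\ell$, others $z_{-\ell}$. $p_\ell=P(Z_{\ell i}=1)$, $\pi_\ell,\rho_\ell$ the differences of $\mathbb E[D_i\mid Z_{\ell i}=z]$, $\mathbb E[Y_i\mid Z_{\ell i}=z]$ between $z=1,0$, $\mathrm{Wald}_\ell=\rho_\ell/\pi_\ell$, $\Sigma_Z=\mathrm{Var}(\mathbf Z_i)$. $q_\ell(z_{-\ell})=P(Z_{-\ell}=z_{-\ell}\mid Z_\ell=1)$, $q^0_\ell(z_{-\ell})=P(Z_{-\ell}=z_{-\ell}\mid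 Z_\ell=0)$, $\varphi_t(\ell)=\sum_{z_{-\ell}}[t(1,z_{-\ell})q_\ell(z_{-\ell})-t(0,z_{-\ell})q^0_\ell(z_{-\ell})]$, $\alpha_t(\ell)=\theta_t\varphi_t(\ell)/\pi_\ell$. $\Delta^{L-1}$ is the probability simplex in $\mathbb R^L$ and $\beta^*(\omega)=\sum_\ell\omega_\ell\mathrm{Wald}_\ell$ (the estimand of the representative targeting estimator $\sum_\ell\omega_\ell\widehat{\mathrm{Wald}}_\ell$). Assumptions: (A1) $(Y_i(0),Y_i(1),D_i(\cdot))$ independent of $\mathbf Z_i$. (A2) $D_i(z)$ nondecreasing in each coordinate for every $i$. (A3) $p_\ell>0$, $\pi_\ell>0$ for all $\ell$; $\Sigma_Z$ positive definite. (A4) For each $\ell$, $\mathbb E[f(Z_{-\ell})\mid Z_\ell=1]\ge\mathbb E[f(Z_{-\ell})\mid Z_\ell=0]$ for every nondecreasing $f:\{0,1\}^{L-1}\to\mathbb R$. *)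

(* Defs.v *)
From HB Require Import structures.
From mathcomp Require Import all_boot all_order all_algebra.
From mathcomp Require Import all_classical all_reals all_analysis.
Set Implicit Arguments.
Unset Strict Implicit.
Unset Printing Implicit Defensive.
Import Order.TTheory GRing.Theory Num.Theory.
Import numFieldNormedType.Exports.
Local Open Scope classical_set_scope.
Local Open Scope ring_scope.

(* Instrument vectors z in {0,1}^L, and z_{-l} in {0,1}^{L-1}. *)
Definition ivec (L : nat) := {ffun 'I_L -> bool}.
Definition ivecm (L : nat) := {ffun 'I_L.-1 -> bool}.
Definition ctype (L : nat) := {ffun ivec L -> bool}.

Definition zminus L (l : 'I_L) (z : ivec L) : ivecm L :=
  [ffun j : 'I_L.-1 => z (lift l j)].
Definition zjoin L (l : 'I_L) (b : bool) (zm : ivecm L) : ivec L :=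
  [ffun i : 'I_L => if unlift l i is Some j then zm j else b].

Definition coord_nondecr L (t : ctype L) : Prop :=
  forall (l : 'I_L) (zm : ivecm L), (t (zjoin l false zm) <= t (zjoin l true zm))%N.
(* the set T of (monotone) compliance types *)
Definition is_type L (t : ctype L) : bool :=
  [forall l : 'I_L, forall zm : ivecm L, t (zjoin l false zm) ==> t (zjoin l true zm)].

Definition nondecr_fun (R : realType) m (f : {ffun 'I_m -> bool} -> R) : Prop :=
  forall x y : {ffun 'I_m -> bool}, (forall j, x j ==> y j) -> f x <= f y.

Section Model.
Context {d : measure_display} {T : measurableType d} {R : realType}
  (P : probability T R) (L : nat)
  (Y0 Y1 : T -> R) (Dt : T -> ctype L) (Z : T -> ivec L).

Definition Pr (A : set T) : R := fine (P A).
Definition Ex (f : T -> R) : R := fine (\int[P]_w (f w)%:E)%E.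
Definition ind (b : bool) : R := (b : nat)%:R.

Definition Dobs (w : T) : R := ind (Dt w (Z w)).
Definition Yobs (w : T) : R := Dobs w * Y1 w + (1 - Dobs w) * Y0 w.

Definition p_ (l : 'I_L) : R := Pr [set w | Z w l].
Definition condE (f : T -> R) (l : 'I_L) (b : bool) : R :=
  Ex (fun w => f w * ind (Z w l == b)) / Pr [set w | Z w l = b].
Definition pi_ (l : 'I_L) : R := condE Dobs l true - condE Dobs l false.
Definition rho_ (l : 'I_L) : R := condE Yobs l true - condE Yobs l false.
Definition Wald (l : 'I_L) : R := rho_ l / pi_ l.

Definition SigmaZ : 'M[R]_L :=
  \matrix_(j, k) (Pr [set w | Z w j /\ Z w k] - Pr [set w | Z w j] * Pr [set w | Z w k]).

Definition theta (t : ctype L) : R := Pr [set w | Dt w = t].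
Definition LATE (t : ctype L) : R :=
  Ex (fun w => (Y1 w - Y0 w) * ind (Dt w == t)) / theta t.

Definition q_ (l : 'I_L) (b : bool) (zm : ivecm L) : R :=
  Pr [set w | zminus l (Z w) = zm /\ Z w l = b] / Pr [set w | Z w l = b].

Definition varphi (t : ctype L) (l : 'I_L) : R :=
  \sum_(zm : ivecm L)
    ((ind (t (zjoin l true zm))) * q_ l true zm - (ind (t (zjoin l false zm))) * q_ l false zm).

Definition alpha (t : ctype L) (l : 'I_L) : R := theta t * varphi t l / pi_ l.

Definition beta_star (om : 'I_L -> R) : R := \sum_(l < L) om l * Wald l.

Definition psi (om : 'I_L -> R) (t : ctype L) : R := \sum_(l < L) om l * alpha t l.

End Model.

Definition posdef (R : realType) n (S : 'M[R]_n) : Prop :=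
  forall v : 'cV[R]_n, v != 0 -> 0 < (v^T *m S *m v) 0 0.

Definition in_simplex (R : realType) L (om : 'I_L -> R) : Prop :=
  (forall l, 0 <= om l) /\ \sum_(l < L) om l = 1.

(* Main.v *)
Require Import Defs.
From HB Require Import structures.
From mathcomp Require Import all_boot all_order all_algebra.
From mathcomp Require Import all_classical all_reals all_analysis.
From mathcomp Require Import measurable_realfun.
From mathcomp Require Import ring.
Import Order.TTheory GRing.Theory Num.Theory.
Import numFieldNormedType.Exports.
Local Open Scope classical_set_scope.
Local Open Scope ring_scope.
Set Implicit Arguments. Unset Strict Implicit.
Lemma zminus_zjoin L (l : 'I_L) b (zm : ivecm L) : zminus l (zjoin l b zm) = zm.
Proof. by apply/ffunP => j; rewrite !ffunE liftK. Qed.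

Lemma zjoin_l L (l : 'I_L) b (zm : ivecm L) : zjoin l b zm l = b.
Proof. by rewrite ffunE unlift_none. Qed.

Lemma zjoinK L (l : 'I_L) (z : ivec L) : zjoin l (z l) (zminus l z) = z.
Proof.
apply/ffunP => i; rewrite ffunE; case: unliftP => [j ->|->] //.
by rewrite ffunE.
Qed.

Lemma zjoin_eq L (l : 'I_L) b zm (z : ivec L) :
  (zminus l z = zm /\ z l = b) <-> z = zjoin l b zm.
Proof.
split => [[<- <-]|->]; first by rewrite zjoinK.
by rewrite zminus_zjoin zjoin_l.
Qed.

Lemma reindex_zjoin (R : nmodType) L (l : 'I_L) b (F : ivec L -> R) :
  \sum_(z : ivec L | z l == b) F z = \sum_(zm : ivecm L) F (zjoin l b zm).
Proof.
rewrite (reindex_onto (zjoin l b) (zminus l)) /=; last first.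
  by move=> z /eqP <-; rewrite zjoinK.
by apply: eq_bigl => zm; rewrite zjoin_l zminus_zjoin !eqxx.
Qed.

Lemma is_typeP L (t : ctype L) : is_type t ->
  forall l zm, t (zjoin l false zm) -> t (zjoin l true zm).
Proof. by move=> /forallP H l zm; move: (H l) => /forallP /(_ zm) /implyP. Qed.

Lemma coord_is_type L (t : ctype L) : coord_nondecr t -> is_type t.
Proof.
move=> H; apply/forallP => l; apply/forallP => zm; apply/implyP => h.
by have := H l zm; rewrite h; case: (t _).
Qed.

Lemma type_mono L (t : ctype L) : is_type t ->
  forall x y : ivec L, (forall i, x i ==> y i) -> t x ==> t y.
Proof.
move=> Ht x y xy.
pose zk (k : nat) : ivec L := [ffun i : 'I_L => if (i < k)%N then y i else x i].
have z0 : zk 0%N = x by apply/ffunP => i; rewrite ffunE.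
have zL : zk L = y by apply/ffunP => i; rewrite ffunE ltn_ord.
suff : forall k, (k <= L)%N -> t x ==> t (zk k) by move/(_ L (leqnn L)); rewrite zL.
elim => [|k IH] kL; first by rewrite z0 implybb.
have {IH} := IH (ltnW kL); move=> IH; apply/implyP => tx; have := implyP IH tx; apply/implyP.

pose i0 : 'I_L := Ordinal kL.
have E1 : zminus i0 (zk k) = zminus i0 (zk k.+1).
  apply/ffunP => j; rewrite !ffunE /=.
  have : lift i0 j != i0 :> nat by rewrite (inj_eq val_inj) eq_sym neq_lift.
  by move=> /= ne; rewrite ltn_neqAle ne.
rewrite -(zjoinK i0 (zk k)) -(zjoinK i0 (zk k.+1)) E1 !ffunE /= ltnn leqnn.
move: (xy i0); case: (x i0); case: (y i0) => //= _.
- by rewrite implybb.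
- by apply/implyP; apply: is_typeP.
- by rewrite implybb.
Qed.
Section S.
Context d (T : measurableType d) (R : realType) (mu : {measure set T -> \bar R}).

Lemma restr_integral (S : set T) (mS : measurable S) (f : T -> \bar R) :
  measurable_fun [set: T] f -> (forall x, (0 <= f x)%E) ->
  (\int[mrestr mu mS]_x f x = \int[mu]_(x in S) f x)%E.
Proof.
move=> mf f0.
have -> : [set: T] = S `|` ~` S by rewrite setUv.
rewrite ge0_integral_setU //; last 3 first.
- exact: measurableC.
- by rewrite setUv.
- by rewrite disj_set2E setICr.
rewrite (@null_set_integral _ _ _ _ (~` S)); last 3 first.
- exact: measurableC.
- exact: measurable_funS mf.
- by change (mu (~` S `&` S) = 0%E); rewrite setICl measure0.
rewrite adde0; apply: eq_measure_integral => A mA AS.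
by change (mu (A `&` S) = mu A); rewrite setIidl.
Qed.

Lemma indep_ge0 (g : T -> R) (mg : measurable_fun [set: T] g) (S1 S : set T)
  (mS1 : measurable S1) (mS : measurable S) (c : {nonneg R})
  (H : forall B, measurable B -> mu (S `&` g @^-1` B) = (c%:num%:E * mu (S1 `&` g @^-1` B))%E)
  (h : R -> \bar R) (mh : measurable_fun [set: R] h) (h0 : forall y, (0 <= h y)%E) :
  (\int[mu]_(x in S) h (g x) = c%:num%:E * \int[mu]_(x in S1) h (g x))%E.
Proof.
have mhg : measurable_fun setT (h \o g) by exact: measurableT_comp.
rewrite -(restr_integral mS) // -(restr_integral mS1) //.
have E1 (m : {measure set T -> \bar R}) :
    (\int[m]_x h (g x) = \int[pushforward m g]_y h y)%E.
  by rewrite (ge0_integral_pushforward mg) // preimage_setT.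
rewrite !E1.
rewrite -ge0_integral_mscale //.
apply: eq_measure_integral => A mA _.
change (mu (g @^-1` A `&` S) = (c%:num%:E * mu (g @^-1` A `&` S1))%E).
by rewrite setIC H // setIC.
Qed.

Lemma indep_int (g : T -> R) (ig : mu.-integrable setT (EFin \o g)) (S1 S : set T)
  (mS1 : measurable S1) (mS : measurable S) (c : R) (c0 : 0 <= c)
  (H : forall B, measurable B -> mu (S `&` g @^-1` B) = (c%:E * mu (S1 `&` g @^-1` B))%E) :
  (\int[mu]_(x in S) (g x)%:E = c%:E * \int[mu]_(x in S1) (g x)%:E)%E.
Proof.
have mg : measurable_fun setT g by apply/measurable_EFinP; exact: measurable_int ig.
pose cn := NngNum c0.
have mE : measurable_fun [set: R] (@EFin R) by apply/measurable_EFinP; exact: measurable_id.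
have E (h : R -> \bar R) (mh : measurable_fun [set: R] h) (h0 : forall y, (0 <= h y)%E) :=
  @indep_ge0 g mg S1 S mS1 mS cn H h mh h0.
rewrite integralE [X in _ = (_ * X)%E]integralE.
have Ep S' : (\int[mu]_(x in S') (fun x0 => (g x0)%:E)^\+ x =
   \int[mu]_(x in S') (funepos (@EFin R)) (g x))%E by apply: eq_integral => x _; by rewrite !funeposE.
have En S' : (\int[mu]_(x in S') (fun x0 => (g x0)%:E)^\- x =
   \int[mu]_(x in S') (funeneg (@EFin R)) (g x))%E by apply: eq_integral => x _; by rewrite !funenegE.
rewrite !Ep !En.
rewrite (E (funepos (@EFin R))); last 2 first.
- exact: measurable_funepos.
- by move=> y; exact: funepos_ge0.
rewrite (E (funeneg (@EFin R))); last 2 first.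
- exact: measurable_funeneg.
- by move=> y; exact: funeneg_ge0.
rewrite [RHS]muleBr //.
apply: fin_num_adde_defl; rewrite fin_numN -En.
apply: integrable_neg_fin_num => //.
exact: (integrableS measurableT mS1 (@subsetT _ _) ig).
Qed.
End S.
Section G.
Context d (T : measurableType d) (R : realType) (P : probability T R).

Lemma decomp (F : finType) (X : T -> F) (mX : forall x, measurable [set w | X w = x])
  (g : T -> R) (ig : P.-integrable setT (EFin \o g)) (h : F -> R) :
  P.-integrable setT (fun w => (g w * h (X w))%:E) /\
  (\int[P]_w (g w * h (X w))%:E =
   \sum_(x : F) ((h x)%:E * \int[P]_(w in [set w | X w = x]) (g w)%:E))%E.
Proof.
have pw : (fun w => (g w * h (X w))%:E) =
    (fun w => \sum_(x : F) ((h x)%:E * ((EFin \o g) \_ [set w | X w = x]) w))%E.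
  apply/funext => w; rewrite (bigD1 (X w)) //= big1 ?adde0.
    by rewrite /patch mem_set //= EFinM muleC.
  move=> x xw; rewrite /patch memNset ?mule0 //= => E.
  by move: xw; rewrite E eqxx.
have iatom x : P.-integrable setT ((EFin \o g) \_ [set w | X w = x]).
  apply/(integrable_mkcond _ (mX x)).
  exact: (integrableS measurableT (mX x) (@subsetT _ _) ig).
split.
  rewrite pw; apply: integrable_sum; try exact: measurableT.
  by move=> x _; apply: integrableZl.
rewrite pw integral_sum //; last by move=> x; exact: integrableZl.
apply: eq_bigr => x _; rewrite integralZl //.
by rewrite -integral_mkcond.
Qed.
End G.
Section Main.
Context d (T : measurableType d) (R : realType) (P : probability T R) (L : nat)
  (Y0 Y1 : T -> R) (Dt : T -> ctype L) (Z : T -> ivec L).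
Hypothesis mZ : forall z : ivec L, measurable [set w | Z w = z].
Hypothesis mDt : forall t : ctype L, measurable [set w | Dt w = t].
Hypothesis iY0 : P.-integrable setT (fun w => (Y0 w)%:E).
Hypothesis iY1 : P.-integrable setT (fun w => (Y1 w)%:E).
Hypothesis A1 : forall (A B : set R) (t : ctype L) (z : ivec L),
      measurable A -> measurable B ->
      P [set w | A (Y0 w) /\ B (Y1 w) /\ Dt w = t /\ Z w = z]
      = (P [set w | A (Y0 w) /\ B (Y1 w) /\ Dt w = t] * P [set w | Z w = z])%E.

Hypothesis A2 : forall w, coord_nondecr (Dt w).
Hypothesis pl : forall l, 0 < p_ P Z l.
Hypothesis pil : forall l, 0 < pi_ P Dt Z l.
Hypothesis pd : posdef (SigmaZ P Z).
Hypothesis A4 : forall (l : 'I_L) (f : ivecm L -> R), nondecr_fun f ->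
      condE P Z (fun w => f (zminus l (Z w))) l false
      <= condE P Z (fun w => f (zminus l (Z w))) l true.

Let pz z := Pr P [set w | Z w = z].
Let th t := theta P Dt t.
Let XP w := (Dt w, Z w).
Let a (g : T -> R) t := fine (\int[P]_(w in [set w | Dt w = t]) (g w)%:E).

Lemma XPE p : [set w | XP w = p] = [set w | Dt w = p.1] `&` [set w | Z w = p.2].
Proof.
apply/seteqP; split => w /=; first by move=> <-.
by rewrite /XP; case: p => t z /= [-> ->].
Qed.

Lemma mXP p : measurable [set w | XP w = p].
Proof. by rewrite XPE; apply: measurableI. Qed.

Lemma fin_int S g : measurable S -> P.-integrable setT (EFin \o g) ->
  (\int[P]_(w in S) (g w)%:E)%E \is a fin_num.
Proof.
move=> mS ig; apply: integrable_fin_num => //.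
exact: (integrableS measurableT mS (@subsetT _ _) ig).
Qed.

Lemma Ex_decomp g (ig : P.-integrable setT (EFin \o g)) (h : ctype L -> ivec L -> R) :
  Ex P (fun w => g w * h (Dt w) (Z w)) =
  \sum_(p : ctype L * ivec L) h p.1 p.2 * fine (\int[P]_(w in [set w | XP w = p]) (g w)%:E).
Proof.
have [_ E] := decomp mXP ig (fun p => h p.1 p.2).
rewrite /Ex /XP /= in E *; rewrite E -sum_fine; last first.
  by move=> p _; rewrite fin_numM ?(fin_int (mXP p)).
apply: eq_bigr => p _; rewrite fineM //.
by rewrite (fin_int (mXP p)).
Qed.

Lemma int1 : P.-integrable setT (EFin \o (fun _ : T => 1 : R)).
Proof. exact: finite_measure_integrable_cst. Qed.

Lemma PrE (S : set T) : measurable S -> (P S)%E = (Pr P S)%:E.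
Proof. by move=> mS; rewrite /Pr fineK // fin_num_measure. Qed.

Lemma Pr_ge0 S : 0 <= Pr P S.
Proof. by rewrite /Pr fine_ge0 // measure_ge0. Qed.

Lemma atom1 p : fine (\int[P]_(w in [set w | XP w = p]) (1 : R)%:E) = th p.1 * pz p.2.
Proof.
rewrite (integral_cst _ (mXP p)) mul1e XPE.
have E := A1 (A:=setT) (B:=setT) p.1 p.2 measurableT measurableT.
have s1 : [set w | Dt w = p.1] `&` [set w | Z w = p.2] =
   [set w | [set: R] (Y0 w) /\ [set: R] (Y1 w) /\ Dt w = p.1 /\ Z w = p.2].
  by apply/seteqP; split => w /=; [case|case=> _ [_ []]].
have s2 : [set w | [set: R] (Y0 w) /\ [set: R] (Y1 w) /\ Dt w = p.1] = [set w | Dt w = p.1].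
  by apply/seteqP; split => w /=; [case=> _ []|].
rewrite s1; apply: (eq_trans (congr1 fine E)).
rewrite s2.
by rewrite (PrE (mDt _)) (PrE (mZ _)) -EFinM.
Qed.

Lemma atomY (Y : T -> R) (iY : P.-integrable setT (EFin \o Y))
  (HY : forall t z B, measurable B ->
     P ([set w | XP w = (t, z)] `&` Y @^-1` B) =
     (P ([set w | Dt w = t] `&` Y @^-1` B) * P [set w | Z w = z])%E) p :
  fine (\int[P]_(w in [set w | XP w = p]) (Y w)%:E) = pz p.2 * a Y p.1.
Proof.
case: p => t z /=.
rewrite (@indep_int _ _ _ _ Y iY [set w | Dt w = t] _ (mDt t) (mXP _) (pz z)).
- by rewrite fineM // fin_int.
- exact: Pr_ge0.
- move=> B mB; apply: (eq_trans (HY t z B mB)).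
  by rewrite (PrE (mZ z)) muleC.
Qed.

Lemma HY0 t z B : measurable B ->
     P ([set w | XP w = (t, z)] `&` Y0 @^-1` B) =
     (P ([set w | Dt w = t] `&` Y0 @^-1` B) * P [set w | Z w = z])%E.
Proof.
move=> mB.
have -> : [set w | XP w = (t, z)] `&` Y0 @^-1` B =
   [set w | B (Y0 w) /\ setT (Y1 w) /\ Dt w = t /\ Z w = z].
  rewrite XPE; apply/seteqP; split => w /=; first by case=> [[-> ->]].
  by case=> ? [_ [-> ->]].
rewrite A1 //; congr (P _ * _)%E.
apply/seteqP; split => w /=; first by case=> ? [_ ->].
by case=> -> ?.
Qed.

Lemma HY1 t z B : measurable B ->
     P ([set w | XP w = (t, z)] `&` Y1 @^-1` B) =
     (P ([set w | Dt w = t] `&` Y1 @^-1` B) * P [set w | Z w = z])%E.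
Proof.
move=> mB.
have -> : [set w | XP w = (t, z)] `&` Y1 @^-1` B =
   [set w | setT (Y0 w) /\ B (Y1 w) /\ Dt w = t /\ Z w = z].
  rewrite XPE; apply/seteqP; split => w /=; first by case=> [[-> ->]].
  by case=> _ [? [-> ->]].
rewrite A1 //; congr (P _ * _)%E.
apply/seteqP; split => w /=; first by case=> _ [? ->].
by case=> -> ?.
Qed.

Lemma mQ (Q : ctype L -> ivec L -> Prop) : measurable [set w | Q (Dt w) (Z w)].
Proof.
have -> : [set w | Q (Dt w) (Z w)] =
    \bigcup_(p in [set p | Q p.1 p.2]) [set w | XP w = p].
  apply/seteqP; split => w /=; first by move=> Qw; exists (XP w).
  by case=> p /= Qp; rewrite /XP => E; move: Qp; rewrite -E.
apply: fin_bigcup_measurable; first exact: finite_finset.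
by move=> p _; exact: mXP.
Qed.

Lemma Ex1 h : Ex P (fun w => h (Dt w) (Z w)) =
  \sum_(t : ctype L) \sum_(z : ivec L) h t z * (th t * pz z).
Proof.
have := Ex_decomp int1 h.
have -> : (fun w => (fun _ : T => 1 : R) w * h (Dt w) (Z w)) = (fun w => h (Dt w) (Z w)).
  by apply/funext => w; rewrite mul1r.
move=> ->; rewrite pair_bigA /=.
by apply: eq_bigr => p _; rewrite atom1.
Qed.

Lemma ExY (Y : T -> R) (iY : P.-integrable setT (EFin \o Y))
  (HY : forall t z B, measurable B ->
     P ([set w | XP w = (t, z)] `&` Y @^-1` B) =
     (P ([set w | Dt w = t] `&` Y @^-1` B) * P [set w | Z w = z])%E) h :
  Ex P (fun w => Y w * h (Dt w) (Z w)) =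
  \sum_(t : ctype L) \sum_(z : ivec L) h t z * (pz z * a Y t).
Proof.
rewrite (Ex_decomp iY h) pair_bigA /=.
by apply: eq_bigr => p _; rewrite (atomY iY HY).
Qed.

Lemma int_decomp (Y : T -> R) (iY : P.-integrable setT (EFin \o Y)) h :
  P.-integrable setT (EFin \o (fun w => Y w * h (Dt w) (Z w))).
Proof. by have [] := decomp mXP iY (fun p => h p.1 p.2). Qed.

Lemma ExD f1 f2 : P.-integrable setT (EFin \o f1) -> P.-integrable setT (EFin \o f2) ->
  Ex P (fun w => f1 w + f2 w) = Ex P f1 + Ex P f2.
Proof.
move=> i1 i2; rewrite /Ex.
have -> : (fun w => (f1 w + f2 w)%:E) = (EFin \o f1) \+ (EFin \o f2) by [].
rewrite integralD_EFin // fineD //; exact: integrable_fin_num.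
Qed.

Lemma Pr_Ex (Q : ctype L -> ivec L -> bool) :
  Pr P [set w | Q (Dt w) (Z w)] = Ex P (fun w => ind (Q (Dt w) (Z w))).
Proof.
rewrite /Pr /Ex.
have mS := mQ (fun t z => Q t z).
rewrite -[in LHS](setIT [set w | Q (Dt w) (Z w)]) -integral_indic //.
congr fine; apply: eq_integral => w _.
by rewrite indicE /ind; case: (boolP (Q _ _)) => q; [rewrite mem_set | rewrite memNset //= (negbTE q)].
Qed.

Lemma sum_th_pz : (\sum_t th t) * (\sum_z pz z) = 1.
Proof.
have := Ex1 (fun _ _ => 1); rewrite /Ex integral_cst // mul1e => E.
rewrite -[RHS](_ : fine (P setT) = 1); last by rewrite probability_setT.
apply: (eq_trans _ (esym E)).
rewrite mulr_suml; apply: eq_bigr => t _; rewrite mulr_sumr.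
by apply: eq_bigr => z _; rewrite mul1r.
Qed.

Lemma pz_th z0 : pz z0 = pz z0 * \sum_t th t.
Proof.
have := Ex1 (fun _ z => ind (z == z0)).
rewrite -(Pr_Ex (fun _ z => z == z0)).
have -> : [set w | Z w == z0] = [set w | Z w = z0].
  by apply/seteqP; split => w /= /eqP.
move=> E; rewrite {1}/pz E mulr_sumr; apply: eq_bigr => t _.
rewrite (bigD1 z0) //= big1 ?addr0; first by rewrite eqxx mul1r mulrC.
by move=> z /negbTE ->; rewrite mul0r.
Qed.

Lemma sum_th : \sum_t th t = 1.
Proof.
have h1 := sum_th_pz.
have h2 : \sum_z pz z = (\sum_z pz z) * \sum_t th t.
  by rewrite mulr_suml; apply: eq_bigr => z _; rewrite -pz_th.
have h3 : \sum_z pz z = 1 by rewrite h2 mulrC h1.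
by rewrite -h1 h3 mulr1.
Qed.

Lemma Ex1Z h : Ex P (fun w => h (Z w)) = \sum_z h z * pz z.
Proof.
rewrite (Ex1 (fun _ z => h z)).
rewrite exchange_big /=; apply: eq_bigr => z _.
transitivity (h z * pz z * \sum_t th t); last by rewrite sum_th mulr1.
by rewrite mulr_sumr; apply: eq_bigr => t _; rewrite (mulrC (th t)) mulrA.
Qed.

Lemma sum_pz : \sum_z pz z = 1.
Proof. by have := sum_th_pz; rewrite sum_th mul1r. Qed.

Let Pb (l : 'I_L) b := Pr P [set w | Z w l = b].

Lemma Pb_sum l b : Pb l b = \sum_(z : ivec L) ind (z l == b) * pz z.
Proof.
have E := Pr_Ex (fun _ z => z l == b); simpl in E.
rewrite /Pb.
have -> : [set w | Z w l = b] = [set w | Z w l == b].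
  by apply/seteqP; split => w /= /eqP.
by rewrite E (Ex1Z (fun z => ind (z l == b))).
Qed.

Lemma sum_ind (F : ivec L -> R) l b :
  \sum_(z : ivec L) ind (z l == b) * F z = \sum_zm F (zjoin l b zm).
Proof.
rewrite -reindex_zjoin [RHS]big_mkcond; apply: eq_bigr => z _.
by rewrite /ind; case: (z l == b); rewrite /= ?mul1r ?mul0r.
Qed.

Lemma q_E l b zm : q_ P Z l b zm = pz (zjoin l b zm) / Pb l b.
Proof.
rewrite /q_ /pz /Pb; congr (Pr P _ / _).
by apply/seteqP; split => w /= /zjoin_eq.
Qed.

Lemma Pb_tf l : Pb l true + Pb l false = 1.
Proof.
rewrite !Pb_sum -big_split /= -sum_pz; apply: eq_bigr => z _.
by case: (z l); rewrite /ind /= ?mul1r ?mul0r ?addr0 ?add0r.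
Qed.

Lemma condE_D l b : condE P Z (Dobs Dt Z) l b =
  \sum_t th t * \sum_zm ind (t (zjoin l b zm)) * q_ P Z l b zm.
Proof.
rewrite /condE.
rewrite (Ex1 (fun (t : ctype L) (z : ivec L) => ind (t z) * ind (z l == b))) -/(Pb l b) mulr_suml; apply: eq_bigr => t _.
under [in RHS]eq_bigr do rewrite q_E.
rewrite -(sum_ind (fun z => ind (t z) * (pz z / Pb l b))).
rewrite mulr_suml mulr_sumr; apply: eq_bigr => z _; ring.
Qed.

Lemma piE l : pi_ P Dt Z l = \sum_t th t * varphi P Z t l.
Proof.
rewrite /pi_ !condE_D -sumrB; apply: eq_bigr => t _.
by rewrite -mulrBr /varphi -sumrB.
Qed.

Lemma diag_pos n (S : 'M[R]_n) : posdef S -> forall l, 0 < S l l.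
Proof.
move=> H l.
have v0 : (delta_mx l 0 : 'cV[R]_n) != 0.
  apply/eqP => /matrixP /(_ l 0); rewrite !mxE !eqxx /=.
  by move/eqP; rewrite oner_eq0.
have := H _ v0.
by rewrite trmx_delta -rowE -colE !mxE.
Qed.

Lemma p_lt1 l : p_ P Z l < 1.
Proof.
have := diag_pos pd l; rewrite /SigmaZ mxE.
have -> : [set w | Z w l /\ Z w l] = [set w | Z w l].
  by apply/seteqP; split => w /=; [case|].
rewrite -/(p_ P Z l) => H.
have : 0 < p_ P Z l * (1 - p_ P Z l) by rewrite mulrBr mulr1.
by rewrite pmulr_rgt0 ?subr_gt0.
Qed.

Lemma Pb_pos l b : 0 < Pb l b.
Proof.
case: b; first exact: pl l.
have E := Pb_tf l; have hp : Pb l true = p_ P Z l by [].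
have -> : Pb l false = 1 - p_ P Z l by rewrite -E -hp; ring.
by rewrite subr_gt0 p_lt1.
Qed.

Lemma condE_Y l b : condE P Z (Yobs Y0 Y1 Dt Z) l b =
  \sum_t a Y0 t + \sum_t (a Y1 t - a Y0 t) * \sum_zm ind (t (zjoin l b zm)) * q_ P Z l b zm.
Proof.
rewrite /condE.
pose h0 := fun (t : ctype L) (z : ivec L) => ((1 - ind (t z)) * ind (z l == b) : R).
pose h1 := fun (t : ctype L) (z : ivec L) => (ind (t z) * ind (z l == b) : R).
have -> : (fun w => Yobs Y0 Y1 Dt Z w * ind (Z w l == b)) =
    (fun w => Y0 w * h0 (Dt w) (Z w) + Y1 w * h1 (Dt w) (Z w)).
  by apply/funext => w; rewrite /Yobs /Dobs /h0 /h1; ring.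
rewrite ExD; [|exact: int_decomp|exact: int_decomp].
rewrite (ExY iY0 HY0) (ExY iY1 HY1) -/(Pb l b) -!big_split /= mulr_suml.
apply: eq_bigr => t _.
have Pb0 : Pb l b != 0 := lt0r_neq0 (Pb_pos l b).
under [in RHS]eq_bigr do rewrite q_E.
rewrite -(sum_ind (fun z => ind (t z) * (pz z / Pb l b))).
rewrite [X in _ = X + _](_ : _ = (\sum_(z : ivec L) ind (z l == b) * pz z * a Y0 t) / Pb l b); last first.
  by rewrite -mulr_suml -Pb_sum mulrC mulKf.
rewrite mulrDl !mulr_suml mulr_sumr -!big_split /=; apply: eq_bigr => z _.
rewrite /h0 /h1; ring.
Qed.

Lemma rhoE l : rho_ P Y0 Y1 Dt Z l = \sum_t (a Y1 t - a Y0 t) * varphi P Z t l.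
Proof.
rewrite /rho_ !condE_Y opprD addrACA subrr add0r -sumrB; apply: eq_bigr => t _.
by rewrite -mulrBr /varphi -sumrB.
Qed.

Lemma ind_true : ind true = 1 :> R. Proof. by []. Qed.
Lemma ind_false : ind false = 0 :> R. Proof. by []. Qed.

Lemma Ex_Yt (Y : T -> R) (iY : P.-integrable setT (EFin \o Y))
  (HY : forall t z B, measurable B ->
     P ([set w | XP w = (t, z)] `&` Y @^-1` B) =
     (P ([set w | Dt w = t] `&` Y @^-1` B) * P [set w | Z w = z])%E) t0 k :
  Ex P (fun w => Y w * (k * ind (Dt w == t0))) = k * a Y t0.
Proof.
rewrite (ExY iY HY (fun t _ => k * ind (t == t0))) (bigD1 t0) //=.
rewrite [X in _ + X]big1 ?addr0; last first.
  move=> t /negbTE tt; apply: big1 => z _.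
  by rewrite tt ind_false mulr0 mul0r.
transitivity (\sum_(z : ivec L) (k * a Y t0) * pz z).
  by apply: eq_bigr => z _; rewrite eqxx ind_true; ring.
by rewrite -mulr_sumr sum_pz mulr1.
Qed.

Lemma a_null (Y : T -> R) (iY : P.-integrable setT (EFin \o Y)) t :
  th t = 0 -> a Y t = 0.
Proof.
move=> H; rewrite /a null_set_integral //.
- apply: measurable_funS (measurable_int _ iY) => //.
- by apply: (eq_trans (PrE (mDt t))); move: H; rewrite /th /theta => ->.
Qed.

Lemma th_LATE t : th t * LATE P Y0 Y1 Dt t = a Y1 t - a Y0 t.
Proof.
rewrite /LATE.
have -> : Ex P (fun w => (Y1 w - Y0 w) * ind (Dt w == t)) = a Y1 t - a Y0 t.
  have -> : (fun w => (Y1 w - Y0 w) * ind (Dt w == t)) =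
     (fun w => Y1 w * (1 * ind (Dt w == t)) + Y0 w * (-1 * ind (Dt w == t))).
    by apply/funext => w; ring.
  rewrite ExD.
  - by rewrite (Ex_Yt iY1 HY1) (Ex_Yt iY0 HY0); ring.
  - exact: (int_decomp iY1 (fun t' _ => 1 * ind (t' == t))).
  - exact: (int_decomp iY0 (fun t' _ => -1 * ind (t' == t))).
rewrite -/(th t).
have [th0|th0] := eqVneq (th t) 0; first by rewrite th0 mul0r (a_null iY1 th0) (a_null iY0 th0) subrr.
by rewrite mulrC divfK.
Qed.

Lemma th_nontype t : ~~ is_type t -> th t = 0.
Proof.
move=> nt; rewrite /th /theta /Pr.
have -> : [set w | Dt w = t] = set0.
  apply/seteqP; split => w //= E; apply: (negP nt); rewrite -E.
  exact: coord_is_type (A2 w).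
by rewrite measure0.
Qed.

Lemma WaldE l : Wald P Y0 Y1 Dt Z l = \sum_t alpha P Dt Z t l * LATE P Y0 Y1 Dt t.
Proof.
rewrite /Wald rhoE mulr_suml; apply: eq_bigr => t _.
by rewrite -th_LATE /alpha -/(th t); ring.
Qed.

Lemma varphi_ge0 t (Ht : is_type t) l : 0 <= varphi P Z t l.
Proof.
pose f (zm : ivecm L) : R := ind (t (zjoin l false zm)).
have Pb0 b : Pb l b != 0 := lt0r_neq0 (Pb_pos l b).
have cf b : condE P Z (fun w => f (zminus l (Z w))) l b = \sum_zm f zm * q_ P Z l b zm.
  rewrite /condE (Ex1Z (fun z => f (zminus l z) * ind (z l == b))) -/(Pb l b) mulr_suml.
  rewrite (eq_bigr (fun z : ivec L => ind (z l == b) * (f (zminus l z) * pz z / Pb l b))); last first.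
    by move=> z _; ring.
  rewrite sum_ind; apply: eq_bigr => zm _.
  by rewrite zminus_zjoin q_E; ring.
have nf : nondecr_fun f.
  move=> x y xy; rewrite /f /ind ler_nat.
  have := @type_mono L t Ht (zjoin l false x) (zjoin l false y).
  have H : forall i, zjoin l false x i ==> zjoin l false y i.
    by move=> i; rewrite !ffunE; case: unlift => [j|] //=.
  move/(_ H); case: (t (zjoin l false x)); case: (t (zjoin l false y)) => //.
have := A4 l nf; rewrite !cf => H.
rewrite /varphi; apply: (@le_trans _ _ (\sum_zm (f zm * q_ P Z l true zm - f zm * q_ P Z l false zm))).
  by rewrite sumrB subr_ge0.
apply: ler_sum => zm _; rewrite /f lerD2r.
apply: ler_wpM2r; first by rewrite q_E divr_ge0 ?Pr_ge0 // ltW // Pb_pos.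
rewrite /ind ler_nat; have := @is_typeP _ t Ht l zm.
by case: (t (zjoin l false zm)); case: (t (zjoin l true zm)) => // /(_ isT).
Qed.

Lemma main om : in_simplex om ->
    beta_star P Y0 Y1 Dt Z om
      = \sum_(t : ctype L | is_type t) psi P Dt Z om t * LATE P Y0 Y1 Dt t
    /\ (forall t : ctype L, is_type t -> 0 <= psi P Dt Z om t)
    /\ \sum_(t : ctype L | is_type t) psi P Dt Z om t = 1.
Proof.
move=> [om0 om1].
have psi0 t : ~~ is_type t -> psi P Dt Z om t = 0.
  move=> nt; rewrite /psi big1 // => l _.
  by rewrite /alpha -/(th t) th_nontype // !mul0r mulr0.
split; last split.
- rewrite big_rmcond; last by move=> t nt; rewrite psi0 // mul0r.
  rewrite /beta_star; under [LHS]eq_bigr do rewrite WaldE mulr_sumr.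
  rewrite exchange_big; apply: eq_bigr => t _; rewrite /psi mulr_suml.
  by apply: eq_bigr => l _; rewrite mulrA.
- move=> t Ht; rewrite /psi; apply: sumr_ge0 => l _; apply: mulr_ge0 => //.
  rewrite /alpha divr_ge0 ?mulr_ge0 ?Pr_ge0 ?varphi_ge0 //.
  exact: ltW.
- rewrite big_rmcond; last by move=> t nt; rewrite psi0.
  rewrite /psi exchange_big /= -om1; apply: eq_bigr => l _.
  rewrite -mulr_sumr (_ : \sum_t alpha P Dt Z t l = 1) ?mulr1 //.
  by rewrite /alpha -mulr_suml -piE divff // lt0r_neq0.
Qed.

End Main.

Unset Implicit Arguments.

Theorem proposition9 (d : measure_display) (T : measurableType d) (R : realType)
  (P : probability T R) (L : nat)
  (Y0 Y1 : T -> R) (Dt : T -> ctype L) (Z : T -> ivec L) :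
  (2 <= L)%N ->
  (* random elements: measurability and integrability *)
  (forall z : ivec L, measurable [set w | Z w = z]) ->
  (forall t : ctype L, measurable [set w | Dt w = t]) ->
  P.-integrable setT (fun w => (Y0 w)%:E) ->
  P.-integrable setT (fun w => (Y1 w)%:E) ->
  (* (A1) (Y(0), Y(1), D(.)) independent of Z *)
  (forall (A B : set R) (t : ctype L) (z : ivec L),
      measurable A -> measurable B ->
      P [set w | A (Y0 w) /\ B (Y1 w) /\ Dt w = t /\ Z w = z]
      = (P [set w | A (Y0 w) /\ B (Y1 w) /\ Dt w = t] * P [set w | Z w = z])%E) ->
  (* (A2) monotonicity *)
  (forall w, coord_nondecr (Dt w)) ->
  (* (A3) *)
  (forall l, 0 < p_ P Z l) ->
  (forall l, 0 < pi_ P Dt Z l) ->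
  posdef (SigmaZ P Z) ->
  (* (A4) *)
  (forall (l : 'I_L) (f : ivecm L -> R), nondecr_fun f ->
      condE P Z (fun w => f (zminus l (Z w))) l false
      <= condE P Z (fun w => f (zminus l (Z w))) l true) ->
  forall om : 'I_L -> R, in_simplex om ->
    beta_star P Y0 Y1 Dt Z om
      = \sum_(t : ctype L | is_type t) psi P Dt Z om t * LATE P Y0 Y1 Dt t
    /\ (forall t : ctype L, is_type t -> 0 <= psi P Dt Z om t)
    /\ \sum_(t : ctype L | is_type t) psi P Dt Z om t = 1.
Proof.
move=> _ mZ mDt iY0 iY1 A1 A2 pl pil pd A4 om hom.
by apply: main.
Qed.
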